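(* Let $(L,\preceq,\bot,\top)$ be a bounded lattice with at least three elements. If $L$ has independent blocks, then $L$ can be decomposed into independent blocks.
   Context: For $k\in L$ let ${\uparrow}k=\{x\in L\mid k\preceq x\}$ and ${\downarrow}k=\{x\in L\mid x\preceq k\}$. A block of $L$ is a sublattice $K\subsetneq L$ (a proper subset) such that $K\setminus\{\bot,\top\}\neq\varnothing$ and $({\uparrow}k\cup{\downarrow}k)\setminus\{\bot,\top\}\subseteq K$ for every $k\in K\setminus\{\bot,\top\}$. Two blocks $K_1,K_2$ are independent if $K_1\cap K_2\subseteq\{\bot,\top\}$; a family of blocks is a family of independent blocks if its members are pairwise independent. $L$ is decomposed into independent blocks if there is a family of independent blocks $\{K_i\}_{i\in I}$ of $L$ with $\bigcup_{i\in I}K_i=L$. *)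

(* Defs.v *)
From mathcomp Require Import all_boot all_order.
Set Implicit Arguments. Unset Strict Implicit. Unset Printing Implicit Defensive.
Import Order.Theory.
Local Open Scope order_scope.

Section Blocks.
Context {disp : Order.disp_t} {L : tbLatticeType disp}.

(* Subsets of L (L may be infinite) are Prop-valued predicates. *)
Definition sublattice (K : L -> Prop) : Prop :=
  forall x y, K x -> K y -> K (x `&` y) /\ K (x `|` y).

Definition is_bound (x : L) : Prop := x = \bot \/ x = \top.

Definition block (K : L -> Prop) : Prop :=
  sublattice K /\
  (exists x, ~ K x) /\
  (exists k, K k /\ ~ is_bound k) /\
  (forall k, K k -> ~ is_bound k ->
     forall x, (k <= x \/ x <= k) -> ~ is_bound x -> K x).

Definition independent (K1 K2 : L -> Prop) : Prop :=
  forall x, K1 x -> K2 x -> is_bound x.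

Definition has_independent_blocks : Prop :=
  exists K1 K2 : L -> Prop, block K1 /\ block K2 /\ independent K1 K2.

Definition decomposable_into_independent_blocks : Prop :=
  exists (I : Type) (K : I -> L -> Prop),
    (forall i, block (K i)) /\
    (forall i j, i <> j -> independent (K i) (K j)) /\
    (forall x, exists i, K i x).

End Blocks.

(* Main.v *)
From Stdlib Require Import Classical FunctionalExtensionality PropExtensionality ProofIrrelevance Relation_Operators Operators_Properties.
Require Import Defs.
From mathcomp Require Import all_boot all_order.
Set Implicit Arguments.
Import Order.Theory.
Local Open Scope order_scope.

Section Aux.
Context {disp : Order.disp_t} {L : tbLatticeType disp}.

Definition R (x y : L) : Prop :=
  ~ is_bound x /\ ~ is_bound y /\ (x <= y \/ y <= x).

Definition conn (c : L) : L -> Prop := clos_refl_trans L R c.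

Lemma R_sym x y : R x y -> R y x.
Proof. by move=> [a [b c]]; split; [|split]; tauto. Qed.

Lemma conn_sym x y : conn x y -> conn y x.
Proof.
move=> h; elim: h => //; last by move=> ? ? ? _ h1 _ h2; apply: rt_trans h2 h1.
- by move=> a b /R_sym h; apply: rt_step.
- by move=> a; apply: rt_refl.
Qed.

Lemma conn_trans x y z : conn x y -> conn y z -> conn x z.
Proof. exact: rt_trans. Qed.

Lemma conn_nb c x : ~ is_bound c -> conn c x -> ~ is_bound x.
Proof.
move=> hc h; move/clos_rt_rt1n_iff: h hc; elim => // a b d [_ [hb _]] _ ih _.
exact: ih.
Qed.

Lemma block_conn (K : L -> Prop) k x : block K -> K k -> ~ is_bound k ->
  conn k x -> K x.
Proof.
move=> [_ [_ [_ hcl]]] hk hnb h; move/clos_rt_rt1n_iff: h hk hnb.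
elim=> // a b d [ha [hb hab]] _ ih Ka nba.
apply: ih => //; exact: (hcl a Ka ha b hab hb).
Qed.

End Aux.

Theorem corollary23 (disp : Order.disp_t) (L : tbLatticeType disp) :
  (exists x y z : L, x <> y /\ y <> z /\ x <> z) ->
  @has_independent_blocks disp L ->
  @decomposable_into_independent_blocks disp L.
Proof.
move=> _ [K1 [K2 [hB1 [hB2 hind]]]].
have [k1 [hk1 nk1]] := proj1 (proj2 (proj2 hB1)).
have [k2 [hk2 nk2]] := proj1 (proj2 (proj2 hB2)).
pose I := {P : L -> Prop | exists c, ~ is_bound c /\ P = conn c}.
exists I, (fun i x => is_bound x \/ proj1_sig i x).
split; last split.
- move=> [P [c [hc eP]]] /=; rewrite eP.
  split; last split; last split.
  + move=> x y hx hy.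
    have bot_meet : forall z : L, \bot `&` z = \bot by move=> z; rewrite meet0x.
    case: hx => [[->|->]|hx].
      rewrite meet0x join0x; split; [left; left|] => //.
      rewrite meet1x join1x; split; [|left; right] => //.
    case: hy => [[->|->]|hy].
      rewrite meetx0 joinx0; split; [left; left|right] => //.
      rewrite meetx1 joinx1; split; [right|left; right] => //.
    have nx := conn_nb hc hx.
    split.
    * case: (classic (is_bound (x `&` y))) => hb; [by left|right].
      apply: conn_trans hx _; apply: rt_step; split => //; split => //.
      by right; exact: leIl.
    * case: (classic (is_bound (x `|` y))) => hb; [by left|right].
      apply: conn_trans hx _; apply: rt_step; split => //; split => //.
      by left; exact: leUl.
  + case: (classic (conn c k1)) => h1.
    * exists k2 => -[//|h2].
      apply: nk2; apply: hind (hk2).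
      apply: (block_conn hB1 hk1 nk1).
      exact: conn_trans (conn_sym h1) h2.
    * by exists k1 => -[//|].
  + by exists c; split; [right; apply: rt_refl|].
  + move=> k [//|hk] nk x hx nx; right.
    apply: conn_trans hk _; apply: rt_step; split => //; split => //.
- move=> [P [c [hc eP]]] [Q [d [hd eQ]]] ne x /= hx hy.
  apply: NNPP => nb; apply: ne.
  case: hx => // hx; case: hy => // hy.
  have ePQ : P = Q.
    subst; apply: functional_extensionality => y; apply: propositional_extensionality.
    split => h.
    + exact: conn_trans hy (conn_trans (conn_sym hx) h).
    + exact: conn_trans hx (conn_trans (conn_sym hy) h).
  apply: eq_sig_hprop => [? ? ?|]; [exact: proof_irrelevance | exact: ePQ].
- move=> x; case: (classic (is_bound x)) => hb.
  + by exists (exist _ (conn k1) (ex_intro _ k1 (conj nk1 erefl))); left.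
  + by exists (exist _ (conn x) (ex_intro _ x (conj hb erefl))); right; apply: rt_refl.
Qed.
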